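(* Let $n=n_1+\dots+n_k$ be a partition of $n$ into positive integers, let $G=U(n)$, and let $L=U(n_1)\times\cdots\times U(n_k)$ and $H=U(1)\times U(n-1)$ be the natural block-diagonal subgroups of $G$. For $1\le i\le k-1$ set $X_i:=-E_{1,\,n_1+\dots+n_i+1}+E_{n_1+\dots+n_i+1,\,1}$ and $B_i:=\exp(\mathbb{R}X_i)\simeq\mathbb{T}$, and let $B:=B_1B_2\cdots B_{k-1}=\{b_1\cdots b_{k-1}:b_i\in B_i\}\subset O(n)$. Then $G=LBH$.
   Context: $E_{ij}$ denotes the $n\times n$ matrix unit with $1$ in position $(i,j)$ and $0$ elsewhere; $\mathbb{T}$ is the circle group. $LBH=\{xbh:x\in L,b\in B,h\in H\}$. *)

(* Defs.v *)
From HB Require Import structures.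
From mathcomp Require Import all_boot all_order all_algebra.
From mathcomp Require Import complex.
From mathcomp Require Import reals trigo.
Set Implicit Arguments. Unset Strict Implicit. Unset Printing Implicit Defensive.
Import Order.TTheory GRing.Theory Num.Theory.
Local Open Scope ring_scope.
Local Open Scope complex_scope.

Section Defs.
Variable R : realType.
Notation C := R[i].

Definition adjmx n (A : 'M[C]_n) : 'M[C]_n := (map_mx (fun z : C => z^*) A)^T.

Definition unitary n (A : 'M[C]_n) : Prop := adjmx A *m A = 1%:M.

(* partial sums m_i = n_1 + ... + n_i for 1 <= i <= k-1 *)
Definition cuts (s : seq nat) : seq nat :=
  [seq sumn (take i s) | i <- iota 1 (size s).-1].

Definition same_block (s : seq nat) (i j : nat) : bool :=
  all (fun c => (i < c)%N == (j < c)%N) (cuts s).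
Definition inL (s : seq nat) n (A : 'M[C]_n) : Prop :=
  unitary A /\ forall i j : 'I_n, ~~ same_block s i j -> A i j = 0.

Definition inH n (A : 'M[C]_n) : Prop :=
  unitary A /\ forall i j : 'I_n, ((val i == 0%N) (+) (val j == 0%N)) -> A i j = 0.

(* exp(t X) where X = -E_{1,c+1} + E_{c+1,1} (1-based), i.e. 0-based indices 0 and c *)
Definition rot n (c : nat) (t : R) : 'M[C]_n :=
  \matrix_(a, b)
    if a == b then (if (val a == 0%N) || (val a == c) then (cos t)%:C else 1)
    else if (val a == c) && (val b == 0%N) then (sin t)%:C
    else if (val a == 0%N) && (val b == c) then (- sin t)%:C
    else 0.

Fixpoint rotprod n (l : seq (nat * R)) : 'M[C]_n :=
  match l with
  | [::] => 1%:M
  | (c, t) :: l' => rot n c t *m rotprod n l'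
  end.

Definition inB (s : seq nat) n (A : 'M[C]_n) : Prop :=
  exists ts : seq R, size ts = size (cuts s) /\ A = rotprod n (zip (cuts s) ts).

End Defs.

(* Main.v *)
Require Import Defs.
From HB Require Import structures.
From mathcomp Require Import all_boot all_order all_algebra.
From mathcomp Require Import complex.
From mathcomp Require Import reals trigo.
Import Order.TTheory GRing.Theory Num.Theory.
Local Open Scope ring_scope.
Local Open Scope complex_scope.
From mathcomp Require Import ring lra zify.

Lemma angle {R : realType} (p q : R) :
  exists t, Num.sqrt (p^+2 + q^+2) * cos t = p /\ Num.sqrt (p^+2 + q^+2) * sin t = q.
Proof.
set s := Num.sqrt _.
have s0 : 0 <= s by apply: sqrtr_ge0.
have ss : s ^+ 2 = p^+2 + q^+2 by rewrite sqr_sqrtr // addr_ge0 // sqr_ge0.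
have [s00|sn0] := eqVneq s 0.
  exists 0; rewrite s00 !mul0r.
  have h : p^+2 + q^+2 = 0 by rewrite -ss s00 expr0n.
  have hp : p ^+ 2 = 0 by apply/eqP; rewrite eq_le sqr_ge0 andbT; move: (sqr_ge0 q); lra.
  have hq : q ^+ 2 = 0 by move: hp h => -> ; rewrite add0r.
  by move/eqP: hp; rewrite sqrf_eq0 => /eqP ->; move/eqP: hq; rewrite sqrf_eq0 => /eqP ->.
have sp : 0 < s by rewrite lt_def sn0.
set x := p / s.
have hx : -1 <= x <= 1.
  have : x ^+ 2 <= 1.
    rewrite /x expr_div_n ler_pdivrMr ?exprn_gt0 // mul1r ss lerDl sqr_ge0 //.
  rewrite -ler_sqrt ?ler01 ?sqr_ge0 // sqrtr1 sqrtr_sqr ler_norml //.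
have e1 : s * x = p by rewrite /x mulrC divfK.
have e2 : s * Num.sqrt (1 - x ^+ 2) = `|q|.
  have -> : s = Num.sqrt (s ^+ 2) by rewrite sqrtr_sqr ger0_norm.
  rewrite -(sqrtr_sqr q) -sqrtrM ?sqr_ge0 //.
  congr Num.sqrt; rewrite mulrBr mulr1 -exprMn e1 ss; ring.
case: (lerP 0 q) => q0.
  exists (acos x); rewrite acosK ?sin_acos // ?inE // e2 ger0_norm //.
exists (- acos x); rewrite cosN sinN acosK ?sin_acos ?inE // mulrN e2 ltr0_norm // opprK //.
Qed.
Lemma sumn_take_lt (s : seq nat) i j : all (fun m => (0 < m)%N) s ->
  (i < j <= size s)%N -> (sumn (take i s) < sumn (take j s))%N.
Proof.
elim: s i j => [|a s IH] i j /=; first by lia.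
move=> /andP[a0 sp]; case: i => [|i]; case: j => [|j] //= hij.
  by lia.
by rewrite ltn_add2l; apply: IH.
Qed.

Lemma cuts_range (s : seq nat) c : all (fun m => (0 < m)%N) s ->
  c \in cuts s -> (0 < c < sumn s)%N.
Proof.
move=> sp hc; have [i hi ->] := mapP hc; move: hi; rewrite mem_iota => hi.
have h1 := @sumn_take_lt s 0 i sp; have h2 := @sumn_take_lt s i (size s) sp.
rewrite take0 take_size /= in h1 h2.
apply/andP; split; [apply: h1 | apply: h2]; lia.
Qed.

Lemma cuts_uniq (s : seq nat) : all (fun m => (0 < m)%N) s -> uniq (cuts s).
Proof.
move=> sp; rewrite map_inj_in_uniq ?iota_uniq // => i j; rewrite !mem_iota => hi hj e.
apply/eqP; apply: contraT => /eqP ne.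
have [lij|lji] : (i < j \/ j < i)%N by lia.
  have := @sumn_take_lt s i j sp; lia.
have := @sumn_take_lt s j i sp; lia.
Qed.

Lemma same_block_refl s i : same_block s i i.
Proof. by apply/allP => c _. Qed.

Lemma same_block_sym s i j : same_block s i j = same_block s j i.
Proof. by apply: eq_all => c; rewrite eq_sym. Qed.

Lemma same_block_trans s i j k : same_block s i j -> same_block s j k -> same_block s i k.
Proof.
move=> /allP h1 /allP h2; apply/allP => c hc.
by rewrite (eqP (h1 c hc)) (eqP (h2 c hc)).
Qed.

Arguments same_block_trans {s i j k}.

Lemma same_block_pred s x : (0 < x)%N -> x \notin cuts s -> same_block s x.-1 x.
Proof.
move=> x0 xn; apply/allP => c hc.
have : c != x by apply: contraNneq xn => <-.
move=> /eqP; lia.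
Qed.

Section Rot.
Variable R : realType.
Notation C := R[i].

Lemma rotE n c (t : R) (x z : 'I_n) : c != 0%N ->
  Defs.rot n c t x z =
  if val x == 0%N then (if val z == 0%N then (cos t)%:C else if val z == c then (- sin t)%:C else 0)
  else if val x == c then (if val z == 0%N then (sin t)%:C else if val z == c then (cos t)%:C else 0)
  else (if val x == val z then 1 else 0).
Proof.
move=> c0; rewrite mxE -val_eqE /=.
case: x z => [x hx] [z hz] /=.
move/eqP: c0 => c0.
do !case: eqP => //=; try lia.
Qed.

Lemma sum2 n (a b : 'I_n) (A B : C) : a != b ->
  \sum_(z < n) (if z == a then A else if z == b then B else 0) = A + B.
Proof.
move=> ab; have ba : b != a by rewrite eq_sym.
rewrite (bigD1 a) //= (eqxx a) (bigD1 b) /= ?ba // (negbTE ba) (eqxx b).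
rewrite big1 ?addr0 // => z /andP[za zb]; by rewrite (negbTE za) (negbTE zb).
Qed.

Lemma sum1 n (a : 'I_n) (A : C) :
  \sum_(z < n) (if z == a then A else 0) = A.
Proof.
rewrite (bigD1 a) //= (eqxx a) big1 ?addr0 // => z za; by rewrite (negbTE za).
Qed.

Lemma sum2v n (a b : 'I_n) (A B : C) : val a != val b ->
  \sum_(z < n) (if val z == val a then A else if val z == val b then B else 0) = A + B.
Proof.
move=> ab; rewrite (bigD1 a) //= eqxx (bigD1 b) /=; last by apply: contra ab => /eqP ->.
rewrite eq_sym (negbTE ab) eqxx big1 ?addr0 // => z /andP[za zb].
by rewrite val_eqE (negbTE za) val_eqE (negbTE zb).
Qed.

Lemma sum1v n (a : 'I_n) (A : C) :
  \sum_(z < n) (if val z == val a then A else 0) = A.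
Proof.
rewrite (bigD1 a) //= eqxx big1 ?addr0 // => z za; by rewrite val_eqE (negbTE za).
Qed.

Lemma rot_mulE n m (i0 ic : 'I_n) (t : R) (Y : 'M[C]_(n, m)) x j :
  val i0 = 0%N -> val ic != 0%N ->
  (Defs.rot n (val ic) t *m Y) x j =
  if val x == 0%N then (cos t)%:C * Y i0 j - (sin t)%:C * Y ic j
  else if val x == val ic then (sin t)%:C * Y i0 j + (cos t)%:C * Y ic j
  else Y x j.
Proof.
move=> h0 hc; rewrite mxE.
have i0c : val i0 != val ic by rewrite h0 eq_sym.
have e0 (z : 'I_n) : (val z == 0%N) = (val z == val i0) by rewrite h0.
under eq_bigr => z _ do rewrite rotE // [val z == 0%N]e0.
case: (eqVneq (val x) 0%N) => [x0|x0].
  rewrite -(@sum2v _ _ _ _ _ i0c); apply: eq_bigr => z _.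
  case: (eqVneq (val z) (val i0)) => [/val_inj -> //|_].
  case: (eqVneq (val z) (val ic)) => [/val_inj -> //|_]; last by rewrite mul0r.
  by rewrite rmorphN mulNr.
case: (eqVneq (val x) (val ic)) => [xc|xc].
  rewrite -(@sum2v _ _ _ _ _ i0c); apply: eq_bigr => z _.
  case: (eqVneq (val z) (val i0)) => [/val_inj -> //|_].
  by case: (eqVneq (val z) (val ic)) => [/val_inj -> //|_]; rewrite mul0r.
rewrite -(@sum1v _ x (Y x j)); apply: eq_bigr => z _; rewrite [val x == _]eq_sym.
by case: (eqVneq (val z) (val x)) => [/val_inj ->|_]; rewrite ?mul1r ?mul0r.
Qed.

Lemma adjmxE n (A : 'M[C]_n) i j : adjmx A i j = (A j i)^*.
Proof. by rewrite !mxE. Qed.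

Lemma adjmxM n (A B : 'M[C]_n) : adjmx (A *m B) = adjmx B *m adjmx A.
Proof.
apply/matrixP => i j; rewrite !mxE rmorph_sum; apply: eq_bigr => k _.
by rewrite !mxE rmorphM mulrC.
Qed.

Lemma adjmxK n (A : 'M[C]_n) : adjmx (adjmx A) = A.
Proof. by apply/matrixP => i j; rewrite !mxE conjcK. Qed.

Lemma unitaryC n (A : 'M[C]_n) : unitary A -> A *m adjmx A = 1%:M.
Proof. exact: mulmx1C. Qed.

Lemma unitaryM n (A B : 'M[C]_n) : unitary A -> unitary B -> unitary (A *m B).
Proof.
rewrite /unitary => hA hB; rewrite adjmxM mulmxA -[_ *m adjmx A *m A]mulmxA hA.
by rewrite mulmx1.
Qed.

Lemma unitary_adj n (A : 'M[C]_n) : unitary A -> unitary (adjmx A).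
Proof. by move=> hA; rewrite /unitary adjmxK; apply: unitaryC. Qed.

Lemma unitary1 n : unitary (1%:M : 'M[C]_n).
Proof.
rewrite /unitary mulmx1; apply/matrixP => i j; rewrite !mxE.
by rewrite conjc_nat eq_sym.
Qed.

Lemma rot_adj n c (t : R) : c != 0%N -> adjmx (Defs.rot n c t) = Defs.rot n c (- t).
Proof.
move=> c0; apply/matrixP => x z; rewrite adjmxE !rotE // cosN sinN opprK.
case: x z => [x hx] [z hz] /=; move/eqP: c0 => c0.
rewrite !(fun_if conjc) ?conjc_real ?conjc0 ?conjc1 ?rmorphN.
do !case: eqP => //=; try lia.
Qed.

Lemma rot_unitary n c (t : R) : (0 < c < n)%N -> unitary (Defs.rot n c t).
Proof.
move=> /andP[c0 cn].
have c0' : c != 0%N by rewrite -lt0n.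
rewrite /unitary rot_adj //.
pose i0 : 'I_n := Ordinal (leq_ltn_trans (leq0n c) cn).
pose ic : 'I_n := Ordinal cn.
have -> : c = val ic by [].
apply/matrixP => x j; rewrite (@rot_mulE n n i0 ic) //.
rewrite !rotE // !mxE cosN sinN /=.
have cs : (cos t)%:C * (cos t)%:C + (sin t)%:C * (sin t)%:C = 1 :> C.
  by rewrite -!rmorphM -rmorphD -!expr2 cos2Dsin2.
case: x j => [x hx] [j hj] /=; rewrite -val_eqE /=.
have sN : (- sin t)%:C = - (sin t)%:C :> C by rewrite rmorphN.
rewrite sN; move: cs; set S := (sin t)%:C; set Co := (cos t)%:C => cs.
do !case: eqP => //=; try lia; move=> *; rewrite ?mulr0 ?subr0 ?addr0 // -?cs; ring.
Qed.


Lemma rotprod_unitary n (l : seq (nat * R)) :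
  all (fun p => (0 < p.1 < n)%N) l -> unitary (rotprod n l).
Proof.
elim: l => [|[c t] l IH] /=; first by move=> _; apply: unitary1.
by move=> /andP[hc hl]; apply: unitaryM; [apply: rot_unitary | apply: IH].
Qed.

Lemma B_exists n (i0 : 'I_n) (cs : seq nat) : val i0 = 0%N ->
  uniq cs -> all (fun c => (0 < c < n)%N) cs ->
  forall y : 'I_n -> R, (forall x, y x != 0 -> (val x == 0%N) || (val x \in cs)) ->
  exists ts : seq R, size ts = size cs /\ exists rho : R,
    rotprod n (zip cs ts) *m (\col_x (if val x == 0%N then rho else 0)%:C)
    = \col_x (y x)%:C.
Proof.
move=> h0; elim: cs => [|c cs IH] /=.
  move=> _ _ y hy; exists [::]; split => //; exists (y i0).
  rewrite mul1mx; apply/matrixP => x j; rewrite !mxE.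
  case: (eqVneq (val x) 0%N) => [hx|hx].
    by have -> : x = i0 by apply: val_inj; rewrite hx h0.
  case: (eqVneq (y x) 0) => [->//|yx].
  by move: (hy x yx); rewrite (negbTE hx) in_nil.
move=> /andP[cn u] /andP[hc ha] y hy.
have c0 : (c != 0)%N by case/andP: hc; rewrite lt0n.
pose ic : 'I_n := Ordinal (proj2 (andP hc)).
have [t [ht1 ht2]] := angle (y i0) (y ic).
set sg := Num.sqrt _ in ht1 ht2.
pose y' (x : 'I_n) := if val x == 0%N then sg else if val x == c then 0 else y x.
have hy' : forall x, y' x != 0 -> (val x == 0%N) || (val x \in cs).
  move=> x; rewrite /y'; case: (eqVneq (val x) 0%N) => [->//|x0].
  rewrite /=.
  case: (eqVneq (val x) c) => [_|xc]; first by rewrite eqxx.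
  move=> /hy; rewrite in_cons (negbTE xc) /=.
  by case/orP => [/eqP e|//]; exfalso; move/eqP: x0; apply; exact: e.
have [ts' [hs [rho hr]]] := IH u ha y' hy'.
exists (t :: ts'); split; first by rewrite /= hs.
exists rho; rewrite /= -mulmxA hr.
apply/matrixP => x j.
have -> : c = val ic by [].
rewrite (@rot_mulE n 1 i0 ic) // !mxE /y' h0 eqxx /= (negbTE c0) eqxx rmorph0 !mulr0 ?subr0 ?addr0.
case: (eqVneq (val x) 0%N) => [hx|hx].
  have -> : x = i0 by apply: val_inj; rewrite hx h0.
  by rewrite -ht1 rmorphM mulrC.
case: (eqVneq (val x) c) => [hx'|hx'].
  have -> : x = ic by apply: val_inj.
  by rewrite -ht2 rmorphM mulrC.
by [].
Qed.

End Rot.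

Section Blocks.
Variable R : realType.
Notation C := R[i].
Variables (s : seq nat) (n : nat).
Notation sb := (fun x y : 'I_n => same_block s x y).

Section N2.
Definition N2 (z : C) : R := complex.Re z ^+ 2 + complex.Im z ^+ 2.
Lemma zconj (z : C) : z * conjc z = (N2 z)%:C.
Proof. case: z => a b; rewrite /N2 /=; simpc. congr Complex; ring. Qed.
Lemma zconj' (z : C) : conjc z * z = (N2 z)%:C.
Proof. by rewrite mulrC zconj. Qed.
Lemma N2_ge0 z : 0 <= N2 z. Proof. by rewrite /N2 addr_ge0 ?sqr_ge0. Qed.
Lemma N2_eq0 z : (N2 z == 0) = (z == 0).
Proof.
case: z => a b; rewrite /N2 /= paddr_eq0 ?sqr_ge0 // !sqrf_eq0.
apply/idP/idP; first by case/andP => /eqP -> /eqP ->.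
by case/eqP => -> ->; rewrite !eqxx.
Qed.
Lemma cjM (a b : C) : conjc (a * b) = conjc a * conjc b. Proof. exact: rmorphM. Qed.
Lemma cjV (a : C) : conjc (a^-1) = (conjc a)^-1. Proof. exact: conjc_inv. Qed.
Lemma cjD (a b : C) : conjc (a + b) = conjc a + conjc b. Proof. exact: rmorphD. Qed.
Lemma cjB (a b : C) : conjc (a - b) = conjc a - conjc b. Proof. exact: rmorphB. Qed.
Lemma cjN (a : C) : conjc (- a) = - conjc a. Proof. exact: rmorphN. Qed.
Lemma cjR (a : R) : conjc (a%:C) = a%:C. Proof. exact: conjc_real. Qed.
Lemma cj0 : conjc (0 : C) = 0. Proof. exact: conjc0. Qed.
Lemma cj1 : conjc (1 : C) = 1. Proof. exact: conjc1. Qed.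
Lemma cjK (a : C) : conjc (conjc a) = a. Proof. exact: conjcK. Qed.
Lemma cjn k : conjc (k%:R : C) = k%:R. Proof. exact: conjc_nat. Qed.
End N2.

Definition st (x : 'I_n) : 'I_n := arg_min x (fun y : 'I_n => same_block s x y) (fun y => val y).

Lemma st_sb (x : 'I_n) : same_block s x (st x).
Proof. by rewrite /st; case: (@arg_minnP _ x (fun y : 'I_n => same_block s x y) (fun y => val y) (same_block_refl s x)). Qed.

Lemma st_min (x : 'I_n) (y : 'I_n) : same_block s x y -> (val (st x) <= val y)%N.
Proof.
rewrite /st; case: (@arg_minnP _ x (fun y : 'I_n => same_block s x y) (fun y => val y) (same_block_refl s x)).
by move=> i _ h /h.
Qed.

Lemma st_eq (x x' : 'I_n) : same_block s x x' -> st x = st x'.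
Proof.
move=> h; apply: val_inj; apply/eqP; rewrite eqn_leq; apply/andP; split; apply: st_min.
  exact: same_block_trans h (st_sb x').
by apply: same_block_trans (st_sb x); rewrite same_block_sym.
Qed.

Lemma sum_blk (T : nmodType) (x x' : 'I_n) (F : 'I_n -> T) : same_block s x x' ->
  \sum_(y : 'I_n | same_block s x y) F y = \sum_(y : 'I_n | same_block s x' y) F y.
Proof.
move=> h; apply: eq_bigl => y; apply/idP/idP => hy.
  by apply: same_block_trans hy; rewrite same_block_sym.
exact: same_block_trans hy.
Qed.

Lemma st_support (x : 'I_n) : x = st x -> (val x == 0%N) || (val x \in cuts s).
Proof.
move=> e; case: (eqVneq (val x) 0%N) => //= x0.
apply: contraT => xc.
have hx : ((val x).-1 < n)%N by apply: leq_ltn_trans (ltn_ord x); rewrite leq_pred.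
have hb : same_block s x (Ordinal hx).
  by rewrite same_block_sym; apply: same_block_pred => //; rewrite lt0n.
have := @st_min x _ hb; rewrite -e /=; lia.
Qed.


Variable v : 'I_n -> C.

Definition rr (x : 'I_n) : R := Num.sqrt (\sum_(y : 'I_n | same_block s x y) N2 (v y)).
Definition om (x : 'I_n) : C :=
  let u := v (st x) in if u == 0 then 1 else u / (Num.sqrt (N2 u))%:C.
Definition ww (x : 'I_n) : C := v x - (if x == st x then om x * (rr x)%:C else 0).
Definition WW (x : 'I_n) : R := \sum_(y : 'I_n | same_block s x y) N2 (ww y).
Definition kk (x : 'I_n) : R := 2 / WW x.
Definition MM : 'M[C]_n :=
  \matrix_(x, z) (if same_block s x z then (kk x)%:C * ww x * conjc (ww z) else 0).
Definition LL : 'M[C]_n := \matrix_(x, z) (om x * ((x == z)%:R - MM x z)).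
Definition yr (x : 'I_n) : R := if x == st x then rr x else 0.

Lemma rr_eq (x x' : 'I_n) : same_block s x x' -> rr x = rr x'.
Proof. by move=> h; rewrite /rr (@sum_blk _ _ _ _ h). Qed.
Lemma om_eq (x x' : 'I_n) : same_block s x x' -> om x = om x'.
Proof. by move=> h; rewrite /om (@st_eq _ _ h). Qed.
Lemma WW_eq (x x' : 'I_n) : same_block s x x' -> WW x = WW x'.
Proof. by move=> h; rewrite /WW (@sum_blk _ _ _ _ h). Qed.
Lemma kk_eq (x x' : 'I_n) : same_block s x x' -> kk x = kk x'.
Proof. by move=> h; rewrite /kk (@WW_eq _ _ h). Qed.

Lemma om_norm x : om x * conjc (om x) = 1.
Proof.
rewrite /om; set u := v (st x); case: (eqVneq u 0) => [_|u0]; first by rewrite mul1r; exact: conjc1.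
set r := Num.sqrt (N2 u).
have r2 : r * r = N2 u by rewrite -expr2 sqr_sqrtr ?N2_ge0.
rewrite cjM cjV cjR mulrACA zconj -invfM -rmorphM r2 mulfV //.
by rewrite fmorph_eq0 N2_eq0.
Qed.


Lemma om_conj x : om x * conjc (v (st x)) = (Num.sqrt (N2 (v (st x))))%:C.
Proof.
rewrite /om; set u := v (st x); case: (eqVneq u 0) => [->|u0].
  by rewrite cj0 mulr0 (eqP (_ : N2 0 == 0)) ?sqrtr0 ?N2_eq0.
set r := Num.sqrt (N2 u).
have r2 : r * r = N2 u by rewrite -expr2 sqr_sqrtr ?N2_ge0.
have rC0 : r%:C != 0.
  rewrite fmorph_eq0; apply/eqP => r0; move: r2; rewrite r0 mul0r => /eqP.
  by rewrite eq_sym N2_eq0 (negbTE u0).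
by rewrite mulrAC zconj -r2 rmorphM mulfK.
Qed.

Lemma LL_adj : adjmx LL *m LL = adjmx (1%:M - MM) *m (1%:M - MM).
Proof.
apply/matrixP => a b; rewrite !mxE; apply: eq_bigr => x _; rewrite !mxE.
by rewrite cjM mulrACA [conjc (om x) * _]mulrC om_norm mul1r.
Qed.

Lemma MM_herm : adjmx (1%:M - MM) = 1%:M - MM.
Proof.
apply/matrixP => x z; rewrite !mxE cjB cjn eq_sym.
have e : same_block s z x = same_block s x z by rewrite same_block_sym.
rewrite e (fun_if conjc); case: (boolP (same_block s x z)) => h; last by rewrite cj0.
by rewrite !cjM cjR cjK (@kk_eq z x) 1?same_block_sym // mulrAC.
Qed.

Lemma MM_sq : MM *m MM = MM + MM.
Proof.
apply/matrixP => x z; rewrite !mxE.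
case: (boolP (same_block s x z)) => hxz; last first.
  rewrite addr0 big1 // => y _; rewrite !mxE.
  case: (boolP (same_block s x y)) => hxy; last by rewrite mul0r.
  case: (boolP (same_block s y z)) => hyz; last by rewrite mulr0.
  by move: hxz; rewrite (same_block_trans hxy hyz).
pose K := ((kk x)%:C ^+ 2 * ww x * conjc (ww z)).
rewrite (eq_bigr (fun y : 'I_n => if same_block s x y then K * (N2 (ww y))%:C else 0)); last first.
  move=> y _; rewrite !mxE; case: (boolP (same_block s x y)) => hxy; last by rewrite mul0r.
  have hyz : same_block s y z by apply: same_block_trans hxz; rewrite same_block_sym.
  rewrite hyz (@kk_eq y x) 1?same_block_sym // /K -zconj'; ring.
rewrite -big_mkcond /= -mulr_sumr -rmorph_sum -/(WW x).
have hk : kk x ^+ 2 * WW x = kk x + kk x.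
  rewrite /kk; case: (eqVneq (WW x) 0) => [->|w0]; first by rewrite invr0 !mulr0 addr0.
  by field.
have -> : K * (WW x)%:C = (kk x ^+ 2 * WW x)%:C * ww x * conjc (ww z).
  by rewrite /K !expr2 !rmorphM; ring.
by rewrite hk rmorphD; ring.
Qed.


Lemma LL_unitary : unitary LL.
Proof.
rewrite /unitary LL_adj MM_herm mulmxBl !mulmxBr mul1mx mulmx1 MM_sq.
have -> : MM - (MM + MM) = - MM by rewrite opprD addrA subrr add0r.
by rewrite mul1mx opprK subrK.
Qed.

Lemma LL_block (x z : 'I_n) : ~~ same_block s x z -> LL x z = 0.
Proof.
move=> h; rewrite !mxE (negbTE h).
have -> : (x == z) = false by apply/negbTE; apply: contra h => /eqP ->; apply: same_block_refl.
by rewrite subr0 mulr0.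
Qed.

Lemma st_st (x : 'I_n) : st (st x) = st x.
Proof. by rewrite -(@st_eq x (st x)) // st_sb. Qed.

Lemma N2_real (a : R) : N2 (a%:C) = a ^+ 2.
Proof. by rewrite /N2 /= expr0n /= addr0. Qed.

Lemma WW_val (x : 'I_n) :
  WW x = 2 * rr x ^+ 2 - 2 * rr x * Num.sqrt (N2 (v (st x))).
Proof.
set s0 := st x; set u := v s0; set r := rr x; set rho := Num.sqrt (N2 u).
have hs0 : same_block s x s0 by apply: st_sb.
have e1 : ww s0 = u - om x * r%:C.
  by rewrite /ww st_st eqxx (@om_eq s0 x) ?(@rr_eq s0 x) // same_block_sym.
have e2 (y : 'I_n) : same_block s x y -> y != s0 -> ww y = v y.
  move=> hy ys; rewrite /ww; case: (eqVneq y (st y)) => [e|_]; last by rewrite subr0.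
  by move: ys; rewrite e -(@st_eq x y hy) eqxx.
have r2 : r ^+ 2 = \sum_(y : 'I_n | same_block s x y) N2 (v y).
  by rewrite /r /rr sqr_sqrtr // sumr_ge0 // => y _; apply: N2_ge0.
have hN : N2 (ww s0) = N2 u - 2 * r * rho + r ^+ 2.
  apply: complexI; rewrite -zconj e1 cjB cjM cjR.
  have h1 : om x * conjc u = rho%:C by apply: om_conj.
  have h2 : conjc (om x) * u = rho%:C by rewrite -[u]cjK -cjM h1 cjR.
  have h3 := om_norm x.
  have -> : (u - om x * r%:C) * (conjc u - conjc (om x) * r%:C) =
     u * conjc u - r%:C * (om x * conjc u) - r%:C * (conjc (om x) * u)
     + r%:C * r%:C * (om x * conjc (om x)) by ring.
  rewrite h1 h2 h3 zconj mulr1 -!rmorphM -!rmorphB -rmorphD; congr (_%:C); ring.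
rewrite /WW (bigD1 s0) //= hN.
rewrite (eq_bigr (fun y : 'I_n => N2 (v y))); last by move=> y /andP[hy ys]; rewrite e2.
move: r2; rewrite (bigD1 s0) //= => r2.
have -> : \sum_(i : 'I_n | same_block s x i && (i != s0)) N2 (v i) = r ^+ 2 - N2 u.
  by rewrite r2 addrC addrK.
ring.
Qed.


Lemma LL_col : LL *m \col_x (yr x)%:C = \col_x v x.
Proof.
apply/matrixP => x j; rewrite [RHS]mxE mxE.
rewrite (eq_bigr (fun z => LL x z * (yr z)%:C)); last by move=> z _; congr (_ * _); rewrite mxE.
set s0 := st x; set u := v s0; set r := rr x; set rho := Num.sqrt (N2 u).
have hs0 : same_block s x s0 by apply: st_sb.
have key z : z != s0 -> LL x z * (yr z)%:C = 0.
  move=> zs; rewrite /yr; case: (eqVneq z (st z)) => [e|_]; last by rewrite rmorph0 mulr0.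
  have nb : ~~ same_block s x z.
    by apply: contra zs => h; rewrite /s0 (@st_eq x z h) -e.
  by rewrite LL_block // mul0r.
rewrite (bigD1 s0) //= big1 ?addr0; last by move=> z /key.
have -> : yr s0 = r by rewrite /yr st_st eqxx /r (@rr_eq s0 x) // same_block_sym.
rewrite [LL x s0]mxE [MM x s0]mxE hs0.
have e1 : ww s0 = u - om x * r%:C.
  by rewrite /ww st_st eqxx (@om_eq s0 x) ?(@rr_eq s0 x) // same_block_sym.
have hA : om x * conjc (ww s0) = rho%:C - r%:C.
  by rewrite e1 cjB cjM cjR mulrBr om_conj mulrA om_norm mul1r.
have ewx : ww x = v x - (if x == s0 then om x * r%:C else 0) by [].
case: (eqVneq (WW x) 0) => [w0|w0].
  have k0 : kk x = 0 by rewrite /kk w0 invr0 mulr0.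
  have wx0 : ww x = 0.
    have := w0; rewrite /WW => /eqP; rewrite psumr_eq0 => [/allP h|y _]; last exact: N2_ge0.
    have := h x (mem_index_enum x); rewrite same_block_refl /= N2_eq0 => /eqP //.
  move: ewx; rewrite wx0 k0 rmorph0 !mul0r subr0 => /eqP; rewrite eq_sym subr_eq0 => /eqP ->.
  by case: (x == s0); rewrite ?mulr1 ?mulr0 ?mul0r.
have hk : (kk x)%:C * (r%:C * (rho%:C - r%:C)) = -1.
  have m1 : (-1 : C) = (-1 : R)%:C by rewrite rmorphN.
  rewrite m1 -!rmorphB -!rmorphM; congr (_%:C).
  move: w0; rewrite /kk WW_val -/s0 -/u -/rho -/r => w0; field.
  by [].
have -> : om x * ((x == s0)%:R - (kk x)%:C * ww x * conjc (ww s0)) * r%:C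
   = om x * (x == s0)%:R * r%:C - ww x * ((kk x)%:C * (r%:C * (om x * conjc (ww s0)))) by ring.
rewrite hA hk ewx; case: (x == s0); rewrite ?mulr1 ?mulr0 ?mul0r ?subr0; ring.
Qed.

Lemma yr_support x : yr x != 0 -> (val x == 0%N) || (val x \in cuts s).
Proof.
rewrite /yr; case: (eqVneq x (st x)) => [e _|]; last by rewrite eqxx.
exact: st_support.
Qed.

End Blocks.

Arguments unitaryM {R n A B}.
Arguments unitary_adj {R n A}.
Arguments unitaryC {R n A}.
Arguments rotprod_unitary {R n l}.
Arguments B_exists {R n i0 cs}.

Lemma all_zip_fst (T : Type) (P : pred nat) (cs : seq nat) (ts : seq T) :
  all P cs -> all (fun p => P p.1) (zip cs ts).
Proof.
elim: cs ts => [|c cs IH] [|t ts] //= /andP[hc ha].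
by rewrite hc IH.
Qed.

Lemma col0_sum (R : realType) n (i0 : 'I_n) (rho : R) (F : 'I_n -> R[i]) :
  val i0 = 0%N ->
  \sum_(x < n) conjc ((if val x == 0%N then rho else 0)%:C) * F x = rho%:C * F i0.
Proof.
move=> h0; rewrite (bigD1 i0) // h0 eqxx cjR big1 ?Monoid.mulm1 // => x xi.
have -> : (val x == 0%N) = false.
  by apply/negbTE; apply: contra xi => /eqP e; apply/eqP/val_inj; rewrite /= e h0.
by rewrite cjR rmorph0 mul0r.
Qed.

Theorem theorem5p1 (R : realType) (s : seq nat) :
  s != [::] -> all (fun m => (0 < m)%N) s ->
  forall g : 'M[R[i]]_(sumn s),
    unitary g <->
    exists (l b h : 'M[R[i]]_(sumn s)),
      [/\ inL s l, inB s b, inH h & g = l *m b *m h].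
Proof.
move=> sne sp g.
have cr : all (fun c => (0 < c < sumn s)%N) (cuts s).
  by apply/allP => c hc; apply: cuts_range.
split; last first.
  move=> [l [b [h [[hl _] [ts [_ ->]] [hh _] ->]]]].
  have hb : unitary (rotprod (sumn s) (zip (cuts s) ts)).
    exact: (rotprod_unitary (@all_zip_fst R _ _ ts cr)).
  exact: unitaryM (unitaryM hl hb) hh.
move=> ug.
have n0 : (0 < sumn s)%N.
  move: sne sp; case E: s => [|a s'] //= _ /andP[a0 _].
  exact: leq_trans a0 (leq_addr _ _).
pose i0 : 'I_(sumn s) := Ordinal n0.
have h0 : val i0 = 0%N by [].
pose v := fun x : 'I_(sumn s) => g x i0.
have [ts [hts [rho hb]]] := B_exists h0 (@cuts_uniq s sp) cr (yr R s _ v) (@yr_support R s _ v).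
set b := rotprod _ _ in hb.
set l := LL R s _ v.
have hl : unitary l by apply: LL_unitary.
have hbU : unitary b by exact: (rotprod_unitary (@all_zip_fst R _ _ ts cr)).
pose h := adjmx b *m adjmx l *m g.
have hU : unitary h by exact: unitaryM (unitaryM (unitary_adj hbU) (unitary_adj hl)) ug.
have hcol x : h x i0 = (if val x == 0%N then rho else 0)%:C.
  have e : adjmx b *m adjmx l *m \col_z v z = \col_x (if val x == 0%N then rho else 0)%:C.
    rewrite -(@LL_col R s _ v) -/l -hb !mulmxA -[adjmx b *m adjmx l *m l]mulmxA hl mulmx1.
    by rewrite -[adjmx b *m b]/(adjmx b *m b) hbU mul1mx.
  have := congr1 (fun M : 'M[R[i]]_(sumn s, 1) => M x ord0) e; rewrite [in RHS]mxE => <-.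
  rewrite /h [LHS]mxE [RHS]mxE; apply: eq_bigr => z _; congr (_ * _); rewrite mxE.
  by [].
have hu : forall z, (adjmx h *m h) i0 z = rho%:C * h i0 z.
  move=> z; rewrite mxE (eq_bigr (fun x => conjc ((if val x == 0%N then rho else 0)%:C) * h x z)).
    exact: col0_sum.
  by move=> x _; rewrite adjmxE hcol.
have rho0 : rho != 0.
  apply/eqP => r0; move: (hu i0); rewrite hU r0 rmorph0 mul0r mxE eqxx /=.
  by move/eqP; rewrite oner_eq0.
exists l, b, h; split.
- split; first exact: hl.
  by move=> i j; apply: LL_block.
- by exists ts; split.
- split => // i j.
  case: (eqVneq (val i) 0%N) => [hi|hi]; case: (eqVneq (val j) 0%N) => [hj|hj] //= _.
    have -> : i = i0 by apply: val_inj; rewrite hi.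
    move: (hu j); rewrite hU mxE.
    have -> : (i0 == j) = false.
      by apply/negbTE; apply: contra hj => /eqP <-.
    move=> /esym /eqP; rewrite mulf_eq0 fmorph_eq0 (negbTE rho0) /= => /eqP //.
  have -> : j = i0 by apply: val_inj; rewrite hj.
  by rewrite hcol (negbTE hi) rmorph0.
- rewrite /h !mulmxA -[l *m b *m adjmx b]mulmxA (unitaryC hbU) mulmx1 (unitaryC hl).
  by rewrite mul1mx.
Qed.
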